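(* Let $V$ be a Hermitian positive definite $m\times m$ matrix such that $\hat L^\dagger(\mathbf{k})V\hat L(\mathbf{k})$ is nonsingular for every nonzero $\mathbf{k}\in\mathbb{R}^d$, set $\Gamma(\mathbf{k})=\hat L(\mathbf{k})\big(\hat L^\dagger(\mathbf{k})V\hat L(\mathbf{k})\big)^{-1}\hat L^\dagger(\mathbf{k})$ and $\Delta(\mathbf{k})=V-V\Gamma(\mathbf{k})V$. Let $\mathbf{v}\in\mathbb{C}^m$ and suppose $\alpha=\sup_{\mathbf{k}\in\mathbb{R}^d,\mathbf{k}\neq 0}\mathbf{v}\cdot\Gamma(\mathbf{k})\mathbf{v}$ is finite and positive. Let $S=V-\mathbf{v}\mathbf{v}^\dagger/\alpha$ and $f(\mathbf{E})=\mathbf{E}\cdot S\mathbf{E}$. Let $\mathbf{k}\neq 0$ be such that $\mathbf{v}\cdot\Gamma(\mathbf{k})\mathbf{v}=\alpha$. Then the set of $\mathbf{G}\in\mathbb{C}^\ell$ with $f(\hat L(\mathbf{k})\mathbf{G})=0$ consists exactly of the vectors $\mathbf{G}=a\big(\hat L^\dagger(\mathbf{k})V\hat L(\mathbf{k})\big)^{-1}\hat L^\dagger(\mathbf{k})\mathbf{v}$ with $a\in\mathbb{C}$; for such $\mathbf{G}$, $\mathbf{H}=\hat L(\mathbf{k})\mathbf{G}=a\Gamma(\mathbf{k})\mathbf{v}$ satisfies $S\mathbf{H}=-a\Delta(\mathbf{k})V^{-1}\mathbf{v}$, and $\hat L^\dagger(\mathbf{k})\Delta(\mathbf{k})=0$,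 so that $S\mathbf{H}$ lies in the null space of $\hat L^\dagger(\mathbf{k})$.
   Context: Fix integers $d,\ell,m,t\ge 1$ and complex constants $A_{rq}$, $A^{a_1\ldots a_h}_{rqh}$ ($1\le r\le m$, $1\le q\le \ell$, $1\le h\le t$, $1\le a_i\le d$). For $\mathbf{k}\in\mathbb{R}^d$, $\hat L(\mathbf{k})$ is the $m\times\ell$ matrix with entries $A_{rq}+\sum_{h=1}^t\sum_{a_1,\ldots,a_h=1}^d i^hA^{a_1\ldots a_h}_{rqh}k_{a_1}\cdots k_{a_h}$ (the symbol of the differential operator $L_{rq}=A_{rq}+\sum_h\sum A^{a_1\ldots a_h}_{rqh}\partial_{x_{a_1}}\cdots\partial_{x_{a_h}}$), and $\hat L^\dagger(\mathbf{k})$ is its conjugate transpose; $\mathbf{v}^\dagger$ is the conjugate transpose of $\mathbf{v}$. For $\mathbf{a},\mathbf{b}\in\mathbb{C}^m$, $\mathbf{a}\cdot\mathbf{b}=\sum_r\overline{a_r}b_r$. *)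

(* Defs.v *)
From HB Require Import structures.
From mathcomp Require Import all_boot all_order all_algebra.
From mathcomp Require Import complex.
Set Implicit Arguments. Unset Strict Implicit. Unset Printing Implicit Defensive.
Import Order.TTheory GRing.Theory Num.Theory.
Local Open Scope ring_scope.
Local Open Scope complex_scope.

Definition adjmx (R : rcfType) (p q : nat) (A : 'M[R[i]]_(p, q)) : 'M[R[i]]_(q, p) :=
  (map_mx (@conjc R) A)^T.

Definition cdot (R : rcfType) (p : nat) (a b : 'cV[R[i]]_p) : R[i] :=
  (adjmx a *m b) 0 0.

(* The symbol \hat L(k) : an m x l matrix.  A0 = (A_{rq}),
   Ah h a = (A^{a_1..a_h}_{rqh}) for a = (a_1,..,a_h), indices 0-based. *)
Definition Lhat (R : rcfType) (d l m t : nat)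
    (A0 : 'M[R[i]]_(m, l)) (Ah : forall h : nat, h.-tuple 'I_d -> 'M[R[i]]_(m, l))
    (k : 'rV[R]_d) : 'M[R[i]]_(m, l) :=
  A0 + \sum_(1 <= h < t.+1) \sum_(a : h.-tuple 'I_d)
         (('i) ^+ h * \prod_(j < h) (k 0 (tnth a j))%:C) *: Ah h a.

Definition hermitian_pd (R : rcfType) (p : nat) (V : 'M[R[i]]_p) : Prop :=
  adjmx V = V /\ forall x : 'cV[R[i]]_p, x != 0 -> 0 < cdot x (V *m x).

Definition Gam (R : rcfType) (m l : nat) (V : 'M[R[i]]_m) (L : 'M[R[i]]_(m, l)) : 'M[R[i]]_m :=
  L *m invmx (adjmx L *m V *m L) *m adjmx L.

(* Main.v *)
Require Import Defs.
From HB Require Import structures.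
From mathcomp Require Import all_boot all_order all_algebra.
From mathcomp Require Import complex.
From mathcomp Require Import ring.
Import Order.TTheory GRing.Theory Num.Theory.
Local Open Scope ring_scope.
Local Open Scope complex_scope.
Set Implicit Arguments. Unset Strict Implicit.

Section H.
Variable R : rcfType.
Local Notation C := R[i].

Lemma adjmxM p q r (A : 'M[C]_(p, q)) (B : 'M[C]_(q, r)) :
  adjmx (A *m B) = adjmx B *m adjmx A.
Proof. by rewrite /adjmx map_mxM trmx_mul. Qed.

Lemma adjmxK p q (A : 'M[C]_(p, q)) : adjmx (adjmx A) = A.
Proof. by apply/matrixP=> i j; rewrite /adjmx !mxE conjcK. Qed.

Lemma adjmxD p q (A B : 'M[C]_(p, q)) : adjmx (A + B) = adjmx A + adjmx B.
Proof. by apply/matrixP=> i j; rewrite /adjmx !mxE rmorphD. Qed.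

Lemma adjmxN p q (A : 'M[C]_(p, q)) : adjmx (- A) = - adjmx A.
Proof. by apply/matrixP=> i j; rewrite /adjmx !mxE rmorphN. Qed.

Lemma adjmxZ p q (a : C) (A : 'M[C]_(p, q)) : adjmx (a *: A) = conjc a *: adjmx A.
Proof. by apply/matrixP=> i j; rewrite /adjmx !mxE rmorphM. Qed.

Lemma adjmx_inv p (A : 'M[C]_p) : adjmx (invmx A) = invmx (adjmx A).
Proof. by rewrite /adjmx map_invmx trmx_inv. Qed.

Lemma cdotDl p (x y z : 'cV[C]_p) : cdot (x + y) z = cdot x z + cdot y z.
Proof. by rewrite /cdot adjmxD mulmxDl mxE. Qed.
Lemma cdotDr p (x y z : 'cV[C]_p) : cdot x (y + z) = cdot x y + cdot x z.
Proof. by rewrite /cdot mulmxDr mxE. Qed.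
Lemma cdotNl p (x z : 'cV[C]_p) : cdot (- x) z = - cdot x z.
Proof. by rewrite /cdot adjmxN mulNmx mxE. Qed.
Lemma cdotNr p (x z : 'cV[C]_p) : cdot x (- z) = - cdot x z.
Proof. by rewrite /cdot mulmxN mxE. Qed.
Lemma cdotZl p a (x z : 'cV[C]_p) : cdot (a *: x) z = conjc a * cdot x z.
Proof. by rewrite /cdot adjmxZ -scalemxAl mxE. Qed.
Lemma cdotZr p a (x z : 'cV[C]_p) : cdot x (a *: z) = a * cdot x z.
Proof. by rewrite /cdot -scalemxAr mxE. Qed.
Lemma cdotMr p q (x : 'cV[C]_p) (A : 'M[C]_(p, q)) (z : 'cV[C]_q) :
  cdot x (A *m z) = cdot (adjmx A *m x) z.
Proof. by rewrite /cdot adjmxM adjmxK mulmxA. Qed.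
Lemma cdotC p (x z : 'cV[C]_p) : cdot z x = conjc (cdot x z).
Proof.
rewrite /cdot -[in RHS](adjmxK z) -adjmxM.
by rewrite /adjmx !mxE conjcK.
Qed.
Lemma cdot0l p (z : 'cV[C]_p) : cdot 0 z = 0.
Proof. by rewrite /cdot /adjmx map_mx0 trmx0 mul0mx mxE. Qed.

Lemma outerE p (x y z : 'cV[C]_p) : (x *m adjmx y) *m z = cdot y z *: x.
Proof.
rewrite -mulmxA; apply/matrixP=> i j; rewrite !mxE big_ord1 /cdot.
by rewrite (ord1 j) mulrC.
Qed.

Lemma pd_unit p (V : 'M[C]_p) : hermitian_pd V -> V \in unitmx.
Proof.
move=> [_ hV].
rewrite -unitmx_tr -row_free_unit -kermx_eq0.
set K := kermx _.
have HK : V *m K^T = 0.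
  by rewrite -(trmxK V) -trmx_mul mulmx_ker trmx0.
have : K^T = 0.
  apply/matrixP=> i j.
  have Hc : V *m col j K^T = 0 by rewrite colE mulmxA HK mul0mx.
  have : col j K^T = 0.
    apply/eqP; apply/negPn/negP=> nz.
    by have := hV _ nz; rewrite Hc /cdot mulmx0 mxE ltxx.
  by move/matrixP/(_ i 0); rewrite !mxE.
by move=> H; rewrite -(trmxK K) H trmx0.
Qed.

Lemma quadL p q (V : 'M[C]_p) (L : 'M[C]_(p, q)) (x y : 'cV[C]_q) :
  cdot (L *m x) (V *m (L *m y)) = cdot x ((adjmx L *m V *m L) *m y).
Proof. by rewrite /cdot adjmxM !mulmxA. Qed.

Lemma key p q (V : 'M[C]_p) (L : 'M[C]_(p, q)) (v : 'cV[C]_p) (a : R) (G : 'cV[C]_q) :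
  adjmx V = V -> (adjmx L *m V *m L) \in unitmx ->
  cdot (adjmx L *m v) (invmx (adjmx L *m V *m L) *m (adjmx L *m v)) = a%:C -> a != 0 ->
  let c := cdot (adjmx L *m v) G / a%:C in
  let r := G - c *: (invmx (adjmx L *m V *m L) *m (adjmx L *m v)) in
  cdot (L *m G) ((V - (a%:C)^-1 *: (v *m adjmx v)) *m (L *m G)) =
  cdot (L *m r) (V *m (L *m r)).
Proof.
move=> hV hM hw ha c r.
set M := adjmx L *m V *m L in hM hw r *.
set w := adjmx L *m v in hw c r *.
set u := invmx M *m w in hw r *.
have hMadj : adjmx M = M by rewrite /M !adjmxM adjmxK hV mulmxA.
have hMu : M *m u = w by rewrite /u mulmxA mulmxV // mul1mx.
have hac : conjc (a%:C) = a%:C by rewrite conjc_real.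
have ha' : a%:C != 0 :> C by rewrite fmorph_eq0.
have h1 : cdot u (M *m G) = cdot w G by rewrite cdotMr hMadj hMu.
have h2 : cdot G w = conjc (cdot w G) by rewrite cdotC.
have h3 : cdot u w = a%:C by rewrite cdotC hw hac.
have h4 : cdot (L *m G) v = conjc (cdot w G) by rewrite cdotC /w -cdotMr.
have h5 : cdot v (L *m G) = cdot w G by rewrite cdotMr.
have hc : conjc c = conjc (cdot w G) / a%:C by rewrite /c rmorphM fmorphV; congr (_ * _^-1); exact: hac.
rewrite [RHS]quadL -/M /r mulmxBr -scalemxAr hMu.
rewrite mulmxBl -scalemxAl outerE cdotDr cdotNr !cdotZr h5 h4 quadL -/M.
rewrite !cdotDl !cdotNl !cdotDr !cdotNr !cdotZl !cdotZr h1 h2 h3 hc /c. by field.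

Qed.
End H.
Unset Implicit Arguments. Set Strict Implicit.
Theorem mainTheorem4 (R : rcfType) (d l m t : nat)
  (hd : (0 < d)%N) (hl : (0 < l)%N) (hm : (0 < m)%N) (ht : (0 < t)%N)
  (A0 : 'M[R[i]]_(m, l)) (Ah : forall h : nat, h.-tuple 'I_d -> 'M[R[i]]_(m, l))
  (V : 'M[R[i]]_m) (hV : hermitian_pd V)
  (hns : forall k : 'rV[R]_d, k != 0 ->
     adjmx (Lhat t A0 Ah k) *m V *m Lhat t A0 Ah k \in unitmx)
  (v : 'cV[R[i]]_m) (alpha : R) (halpha_pos : 0 < alpha)
  (hub : forall k : 'rV[R]_d, k != 0 ->
     cdot v (Gam V (Lhat t A0 Ah k) *m v) <= alpha%:C)
  (hlub : forall b : R, (forall k : 'rV[R]_d, k != 0 ->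
     cdot v (Gam V (Lhat t A0 Ah k) *m v) <= b%:C) -> alpha <= b)
  (k : 'rV[R]_d) (hk : k != 0)
  (hatt : cdot v (Gam V (Lhat t A0 Ah k) *m v) = alpha%:C) :
  let L := Lhat t A0 Ah k in
  let M := adjmx L *m V *m L in
  let Gm := Gam V L in
  let Dl := V - V *m Gm *m V in
  let S := V - (alpha%:C)^-1 *: (v *m adjmx v) in
  let f := fun E : 'cV[R[i]]_m => cdot E (S *m E) in
  (forall G : 'cV[R[i]]_l,
     f (L *m G) = 0 <-> exists a : R[i], G = a *: (invmx M *m adjmx L *m v)) /\
  (forall a : R[i],
     let H := L *m (a *: (invmx M *m adjmx L *m v)) in
     H = a *: (Gm *m v) /\
     S *m H = - (a *: (Dl *m invmx V *m v)) /\
     adjmx L *m (S *m H) = 0) /\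
  adjmx L *m Dl = 0.
Proof.
move=> L M Gm Dl S f.
have hMu : M \in unitmx := hns k hk.
have hVu := pd_unit hV.
have hVadj := proj1 hV.
have ha : alpha != 0 := lt0r_neq0 halpha_pos.
have ha' : alpha%:C != 0 :> R[i] by rewrite fmorph_eq0.
have hatt' : cdot v (Gm *m v) = alpha%:C by [].
have hw : cdot (adjmx L *m v) (invmx M *m (adjmx L *m v)) = alpha%:C.
  by rewrite -hatt' /Gm /Gam -/M -!mulmxA cdotMr.
have hDl : adjmx L *m Dl = 0.
  rewrite /Dl /Gm /Gam -/M mulmxBr !mulmxA -/M mulmxV // mul1mx.
  by rewrite subrr.
have hH : forall a : R[i], L *m (a *: (invmx M *m adjmx L *m v)) = a *: (Gm *m v).
  by move=> a; rewrite /Gm /Gam -/M -scalemxAr !mulmxA.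
have hSH : forall a : R[i], S *m (L *m (a *: (invmx M *m adjmx L *m v)))
    = - (a *: (Dl *m invmx V *m v)).
  move=> a; rewrite hH -scalemxAr /S mulmxBl -scalemxAl outerE hatt'.
  rewrite scalerA mulVf // scale1r.
  have -> : Dl *m invmx V *m v = v - V *m (Gm *m v).
    by rewrite /Dl !mulmxBl mulmxV // mul1mx -!mulmxA mulKVmx.
  by rewrite -scalerN opprB.
split; last split; last exact: hDl.
  move=> G.
  have K := @key R _ _ V L v alpha G hVadj hMu hw ha.
  move: K => /= K.
  rewrite /f /S K.
  split.
    set c := cdot _ G / _.
    set r := G - _.
    move=> H0.
    have hLr : L *m r = 0.
      apply/eqP; apply/negPn/negP=> nz.
      by have := proj2 hV _ nz; rewrite H0 ltxx.
    have hr : r = 0.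
      have hMr : M *m r = 0 by rewrite /M -mulmxA hLr mulmx0.
      by rewrite -(mulKmx hMu r) hMr mulmx0.
    exists c; rewrite -mulmxA; exact: subr0_eq hr.
  move=> [a ->].
  rewrite -mulmxA cdotZr hw mulfK //.
  by rewrite subrr mulmx0 cdot0l.
move=> a H; split; first exact: hH.
split; first exact: hSH.
by rewrite /H hSH mulmxN -scalemxAr !mulmxA hDl !mul0mx scaler0 oppr0.
Qed.
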